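(* Let $m$ be a positive integer and $n$ an integer with $\frac{3^{m-1}+1}{2}\le n\le\frac{3^m-1}{2}$ (so feasible partitions of $n$ have $m$ parts). (a) If $\frac{3^{m-1}+1}{2}\le n\le \frac{3^{m-1}+1}{2}+3^{m-2}$, then the smallest and largest values of $R_{m-1}$ over all feasible partitions of $n$ are $\left\lceil\frac{n-1}{3}\right\rceil$ and $\left\lfloor\frac{2n+3^{m-2}-1}{4}\right\rfloor$, respectively; that is, the range of $R_{m-1}$ is $\left\lceil\frac{n-1}{3}\right\rceil\le R_{m-1}\le\left\lfloor\frac{2n+3^{m-2}-1}{4}\right\rfloor$. (b) If $\frac{3^{m-1}+1}{2}+3^{m-2}+1\le n\le\frac{3^m-1}{2}$, then the range of $R_{m-1}$ over all feasible partitions of $n$ is $\left\lceil\frac{n-1}{3}\right\rceil\le R_{m-1}\le\frac{3^{m-1}-1}{2}$, with both bounds attained.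
   Context: A weighing partition of a positive integer $n$ is a multiset of positive integers summing to $n$ such that every integer $\ell$ with $1\le\ell\le n$ is a sum $\sum_j u_jw_j$ with $u_j\in\{-1,0,1\}$. A feasible partition of $n$ is a weighing partition of $n$ whose number of parts $m$ is minimal among all weighing partitions of $n$, written $w_1\le\dots\le w_m$. For such a partition, $R_i=w_1+\dots+w_i$ with $R_0=0$; in particular $R_{m-1}=n-w_m$. *)

(* Defs.v *)
From mathcomp Require Import all_boot all_order all_algebra.
Set Implicit Arguments. Unset Strict Implicit. Unset Printing Implicit Defensive.
Import Order.TTheory GRing.Theory Num.Theory.

(* A partition of n is represented by the finite list of its parts
   (order irrelevant; a multiset). *)

Definition representable (w : seq nat) (l : nat) : Prop :=
  exists u : nat -> int,
    (forall j, u j = 0%R \/ u j = 1%R \/ u j = (-1)%R) /\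
    (\sum_(j < size w) u j * Posz (nth 0%N w j))%R = Posz l.

Definition weighing_partition (n : nat) (w : seq nat) : Prop :=
  all (fun x => 0 < x) w /\ sumn w = n /\
  forall l, 1 <= l <= n -> representable w l.

Definition feasible_partition (n : nat) (w : seq nat) : Prop :=
  weighing_partition n w /\
  forall w', weighing_partition n w' -> size w <= size w'.

(* R_{m-1} = n - w_m, where w_m is the largest part *)
Definition R_last (n : nat) (w : seq nat) : nat := n - \max_(x <- w) x.

(* Main.v *)
Require Import Defs.
From mathcomp Require Import all_boot all_order all_algebra.
From mathcomp Require Import zify.
Import Order.TTheory GRing.Theory Num.Theory.
Set Implicit Arguments. Unset Strict Implicit. Unset Printing Implicit Defensive.

Fixpoint vals (s : seq nat) : seq int :=
  match s with
  | [::] => [:: 0%R]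
  | x :: t => vals t ++ [seq (z + x%:Z)%R | z <- vals t] ++ [seq (z - x%:Z)%R | z <- vals t]
  end.

Definition reach s (z : int) := z \in vals s.

Lemma reach_nil z : reach [::] z = (z == 0%R).
Proof. by rewrite /reach inE. Qed.

Lemma reach_cons x s z : reach (x :: s) z =
  [|| reach s z, reach s (z - x%:Z)%R | reach s (z + x%:Z)%R].
Proof.
rewrite /reach /= !mem_cat; congr [|| _, _ | _].
- apply/mapP/idP => [[y Hy ->]|H]; first by rewrite addrK.
  by exists (z - x%:Z)%R => //; rewrite subrK.
- apply/mapP/idP => [[y Hy ->]|H]; first by rewrite subrK.
  by exists (z + x%:Z)%R => //; rewrite addrK.
Qed.

Lemma size_vals s : size (vals s) = 3 ^ size s.
Proof. elim: s => //= x s IH; rewrite !size_cat !size_map IH expnS; lia. Qed.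

Lemma reach0 s : reach s 0%R.
Proof. elim: s => [|x s IH]; by rewrite ?reach_nil ?reach_cons ?IH. Qed.

Lemma reachN s z : reach s z -> reach s (- z)%R.
Proof.
elim: s z => [|x s IH] z; first by rewrite !reach_nil => /eqP ->; rewrite oppr0.
rewrite !reach_cons => /or3P [] H; apply/or3P.
- by apply: Or31; apply: IH.
- apply: Or33; have -> : (- z + x%:Z = - (z - x%:Z))%R by lia. exact: IH.
- apply: Or32; have -> : (- z - x%:Z = - (z + x%:Z))%R by lia. exact: IH.
Qed.

Lemma reach_abs s z : reach s z -> (- (sumn s)%:Z <= z <= (sumn s)%:Z)%R.
Proof.
elim: s z => [|x s IH] z; first by rewrite reach_nil => /eqP ->.
rewrite reach_cons /= => /or3P [] /IH /andP [H1 H2]; apply/andP; split; lia.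
Qed.

Lemma repr_reach s z :
  (exists u : nat -> int, (forall j, u j = 0%R \/ u j = 1%R \/ u j = (-1)%R) /\
    (\sum_(j < size s) u j * Posz (nth 0%N s j))%R = z) <-> reach s z.
Proof.
elim: s z => [|x s IH] z.
  rewrite reach_nil; split => [[u [_ <-]]|/eqP->]; first by rewrite big_ord0.
  by exists (fun _ => 0%R); split; auto; rewrite big_ord0.
rewrite reach_cons /=; split.
- case=> u [Hu]; rewrite big_ord_recl /= => Hz.
  have Hs : reach s (\sum_(i < size s) u i.+1 * Posz (nth 0%N s i))%R.
    by apply/IH; exists (fun j => u j.+1); split.
  case: (Hu 0) => [|[]] E; rewrite E in Hz; apply/or3P.
  + by apply: Or31; rewrite -Hz mul0r add0r.
  + by apply: Or32; rewrite -Hz mul1r addrC addKr.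
  + by apply: Or33; rewrite -Hz mulN1r addrC addNKr.
- have key : forall c z', c = 0%R \/ c = 1%R \/ c = (-1)%R -> reach s z' ->
     z = (c * x%:Z + z')%R ->
     exists u : nat -> int, (forall j, u j = 0%R \/ u j = 1%R \/ u j = (-1)%R) /\
      (\sum_(j < (size s).+1) u j * Posz (nth 0%N (x :: s) j))%R = z.
    move=> c z' Hc /IH [u [Hu Hsum]] ->.
    exists (fun j => if j is j'.+1 then u j' else c); split; first by case.
    by rewrite big_ord_recl /= Hsum.
  case/or3P => H.
  + by apply: (key 0%R z); auto; rewrite mul0r add0r.
  + by apply: (key 1%R (z - x%:Z)%R); auto; rewrite mul1r addrC subrK.
  + by apply: (key (-1)%R (z + x%:Z)%R); auto; rewrite mulN1r addrC addrK.
Qed.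


Lemma filter_sum_le (p : pred nat) s : sumn (filter p s) <= sumn s.
Proof. elim: s => //= x s IH; case: (p x) => /=; lia. Qed.

Lemma filter_sum_add (p : pred nat) s y :
  y \in s -> ~~ p y -> sumn (filter p s) + y <= sumn s.
Proof.
elim: s => //= x s IH; rewrite inE => /orP [/eqP <-|H] Hp.
  by rewrite (negbTE Hp); have := filter_sum_le p s; lia.
by case: (p x) => /=; have := IH H Hp; lia.
Qed.

Lemma le_sumn y s : y \in s -> y <= sumn s.
Proof.
elim: s => //= x s IH; rewrite inE => /orP [/eqP ->|/IH]; lia.
Qed.

Lemma sumn_rem x s : x \in s -> sumn s = x + sumn (rem x s).
Proof.
elim: s => //= y s IH; rewrite inE eq_sym; case: eqP => [->|ne] /= H //.
rewrite (IH H) /=; lia.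
Qed.

Lemma filter_rem (p : pred nat) x s : x \in s ->
  sumn (filter p s) = (if p x then x else 0) + sumn (filter p (rem x s)).
Proof.
elim: s => //= y s IH; rewrite inE eq_sym; case: eqP => [->|ne] /= H.
  by case: (p x).
case: (p y) => /=; rewrite (IH H); lia.
Qed.

Lemma reach_swap x y r z : reach (x :: y :: r) z = reach (y :: x :: r) z.
Proof.
rewrite !reach_cons.
have E1 : (z - x%:Z - y%:Z = z - y%:Z - x%:Z)%R by lia.
have E2 : (z - x%:Z + y%:Z = z + y%:Z - x%:Z)%R by lia.
have E3 : (z + x%:Z - y%:Z = z - y%:Z + x%:Z)%R by lia.
have E4 : (z + x%:Z + y%:Z = z + y%:Z + x%:Z)%R by lia.
rewrite E1 E2 E3 E4.
move: (reach r z) (reach r (z - y%:Z)%R) (reach r (z + y%:Z)%R)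
  (reach r (z - x%:Z)%R) (reach r (z + x%:Z)%R)
  (reach r (z - y%:Z - x%:Z)%R) (reach r (z + y%:Z - x%:Z)%R)
  (reach r (z - y%:Z + x%:Z)%R) (reach r (z + y%:Z + x%:Z)%R).
by do 9 case.
Qed.

Lemma reach_rem x s z : x \in s -> reach s z = reach (x :: rem x s) z.
Proof.
elim: s z => //= y s IH z; rewrite inE eq_sym; case: eqP => [->|ne] /= H //.
by rewrite reach_swap (reach_cons y s) (reach_cons y (x :: rem x s)) -!IH.
Qed.

Lemma inv s t z : reach s z ->
  ((sumn s)%:Z - 2 * (sumn [seq y <- s | (y < t)%N])%:Z <= z \/
   z <= (sumn s)%:Z - t%:Z)%R.
Proof.
elim: s z => [|x s IH] z; first by rewrite reach_nil => /eqP ->; left.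
move=> H; have := reach_abs H; move: H.
rewrite reach_cons => /or3P [] H; have := IH _ H; have := reach_abs H;
  rewrite /=; case: (ltnP x t) => Hxt /=; lia.
Qed.

Definition weigh n w := all (fun x => 0 < x) w /\ sumn w = n /\
  forall l, 0 < l <= n -> reach w (Posz l).

Lemma weighE n w : weighing_partition n w <-> weigh n w.
Proof.
rewrite /weighing_partition /weigh /representable; split.
  case=> [H1 [H2 H3]]; do 2 split => //; move=> l Hl; apply/repr_reach; exact: H3.
case=> [H1 [H2 H3]]; do 2 split => //; move=> l Hl; apply/repr_reach; exact: H3.
Qed.

Lemma gap n w y : weigh n w -> y \in w -> y <= 2 * sumn [seq v <- w | v < y] + 1.
Proof.
case=> [_ [Hs Hc]] Hy; rewrite leqNgt; apply/negP => Hlt.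
have Hadd := @filter_sum_add (fun v => v < y) w y Hy (negbT (ltnn y)).
set A := sumn _ in Hlt Hadd.
have := Hc (n - 2 * A - 1); rewrite Hs in Hadd.
have Hl : 0 < n - 2 * A - 1 <= n by lia.
move=> /(_ Hl) /(inv y); rewrite -/A Hs; lia.
Qed.

Lemma step x r z : (forall z, (- (sumn r)%:Z <= z <= (sumn r)%:Z)%R -> reach r z) ->
  x <= 2 * sumn r + 1 -> (- (x + sumn r)%:Z <= z <= (x + sumn r)%:Z)%R ->
  reach (x :: r) z.
Proof.
move=> Hr Hx /andP [H1 H2]; rewrite reach_cons; apply/or3P.
case: (boolP (z <= (sumn r)%:Z)%R) => Ha.
  case: (boolP (- (sumn r)%:Z <= z)%R) => Hb.
    by apply: Or31; apply: Hr; rewrite Ha Hb.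
  by apply: Or33; apply: Hr; apply/andP; split; lia.
by apply: Or32; apply: Hr; apply/andP; split; lia.
Qed.

Lemma max_prop s : s != [::] ->
  (\max_(y <- s) y) \in s /\ forall y, y \in s -> y <= \max_(y <- s) y.
Proof.
elim: s => //= x s IH _; rewrite big_cons.
case: (altP (s =P [::])) => [->|ne].
  by rewrite big_nil maxn0 inE eqxx; split => // y; rewrite inE => /eqP ->.
have [H1 H2] := IH ne; split.
  by case: (leqP x (\max_(y <- s) y)) => H; rewrite ?(maxn_idPr H) ?(maxn_idPl (ltnW H)) inE ?H1 ?orbT ?eqxx.
move=> y; rewrite inE => /orP [/eqP ->|/H2]; lia.
Qed.

Lemma max_le M s : (forall y, y \in s -> y <= M) -> \max_(y <- s) y <= M.
Proof.
elim: s => [|x s IH] H; first by rewrite big_nil.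
rewrite big_cons geq_max H ?inE ?eqxx //=; apply: IH => y Hy; apply: H; by rewrite inE Hy orbT.
Qed.

Lemma suff_filter k s : size s <= k ->
  (forall y, y \in s -> y <= 2 * sumn [seq v <- s | v < y] + 1) ->
  forall z : int, (- (sumn s)%:Z <= z <= (sumn s)%:Z)%R -> reach s z.
Proof.
elim: k s => [|k IH] s.
  rewrite leqn0 => /nilP -> _ z /=; rewrite reach_nil; lia.
case: (altP (s =P [::])) => [-> _ _ z|ne Hsz Hc z Hz].
  rewrite reach_nil /=; lia.
have [Hx Hle] := max_prop ne; set x := \max_(y <- s) y in Hx Hle.
set r := rem x s.
have Hsr : size r = (size s).-1 by rewrite size_rem.
have Hcr : forall y, y \in r -> y <= 2 * sumn [seq v <- r | v < y] + 1.
  move=> y Hy; have Hys := mem_rem Hy.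
  have := Hc y Hys; rewrite (filter_rem (fun v => v < y) Hx) /=.
  have := Hle y Hys; case: ltnP => //; lia.
have IHr := IH r ltac:(lia) Hcr.
rewrite (reach_rem _ Hx); apply: step => //.
  have := Hc x Hx; rewrite (filter_rem (fun v => v < x) Hx) ltnn /=.
  have := filter_sum_le (fun v => v < x) r; rewrite -/r; lia.
by rewrite -(sumn_rem Hx).
Qed.


Lemma count_bound n w : weigh n w -> 2 * n + 1 <= 3 ^ size w.
Proof.
case=> [_ [_ Hc]].
rewrite -size_vals.
have -> : 2 * n + 1 = size [seq (Posz i - Posz n)%R | i <- iota 0 (2 * n + 1)]
  by rewrite size_map size_iota.
apply: uniq_leq_size.
  rewrite map_inj_uniq ?iota_uniq // => i j /= /addIr; by case.
move=> z /mapP [i]; rewrite mem_iota => Hi ->.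
case: (ltngtP i n) => Hin.
- have -> : (Posz i - Posz n = - Posz (n - i))%R by lia.
  apply: reachN; apply: Hc; lia.
- have -> : (Posz i - Posz n = Posz (i - n))%R by lia.
  apply: Hc; lia.
- by rewrite Hin subrr; apply: reach0.
Qed.

Lemma drop_max n w : weigh n w -> w != [::] ->
  let x := \max_(y <- w) y in
  [/\ x \in w, x <= n, weigh (n - x) (rem x w), size (rem x w) = (size w).-1 &
      x <= 2 * (n - x) + 1 /\ forall y, y \in w -> y <= x].
Proof.
move=> Hw ne x; have [Hx Hle] := max_prop ne; rewrite -/x in Hx Hle.
have Hw' := Hw; case: Hw' => [Hp [Hs Hc]].
have Hsum := sumn_rem Hx; rewrite Hs in Hsum.
split => //; first lia; last first.
- split => //.
  have := gap Hw Hx; rewrite (filter_rem (fun v => v < x) Hx) ltnn /=.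
  have := filter_sum_le (fun v => v < x) (rem x w); lia.
- by rewrite size_rem.
split; first by apply/allP => y /mem_rem Hy; exact: (allP Hp).
split; first lia.
move=> l Hl; apply: (@suff_filter (size (rem x w))) => //.
  move=> y Hy; have Hys := mem_rem Hy.
  have := gap Hw Hys; rewrite (filter_rem (fun v => v < y) Hx) /=.
  have := Hle y Hys; case: ltnP => //; lia.
lia.
Qed.

Fixpoint good (s : seq nat) := if s is x :: t then (x <= 2 * sumn t + 1) && good t else true.

Lemma good_cover s : good s ->
  forall z : int, (- (sumn s)%:Z <= z <= (sumn s)%:Z)%R -> reach s z.
Proof.
elim: s => [|x s IH] /=.
  by move=> _ z; rewrite reach_nil; lia.
by move=> /andP [H1 H2] z Hz; apply: step => //; apply: IH.
Qed.

Lemma good_weigh s : all (fun x => 0 < x) s -> good s -> weigh (sumn s) s.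
Proof.
move=> Hp Hg; do 2 split => //; move=> l Hl; apply: good_cover => //; lia.
Qed.

Lemma odd3 k : exists h, 3 ^ k = 2 * h + 1.
Proof.
elim: k => [|k [h IH]]; first by exists 0.
by exists (3 * h + 1); rewrite expnS IH; lia.
Qed.

Lemma pow3_lin k : 2 * k + 1 <= 3 ^ k.
Proof. elim: k => // k IH; rewrite expnS; lia. Qed.

Lemma pow3_lin6 k : 6 * k <= 3 ^ k + 3.
Proof.
elim: k => // k IH; rewrite expnS; case: k IH => [|k] IH; first by [].
have := pow3_lin k.+1; lia.
Qed.

Lemma build k R : k <= R -> 2 * R + 1 <= 3 ^ k ->
  exists s, [/\ size s = k, all (fun x => 0 < x) s, sumn s = R & good s].
Proof.
elim: k R => [|k IH] R HkR HR.
  by exists [::]; split => //=; move: HR; rewrite expn0; lia.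
have [h Hh] := odd3 k; have := pow3_lin k; rewrite Hh => Hkh.
move: HR; rewrite expnS Hh => HR.
case: (leqP R h.+1) => H.
  have [s [H1 H2 H3 H4]] := IH (R - 1) ltac:(lia) ltac:(lia).
  exists (1 :: s); split => /=; rewrite ?H1 ?H2 ?H3 ?H4 //; lia.
have [s [H1 H2 H3 H4]] := IH h ltac:(lia) ltac:(lia).
exists ((R - h) :: s); split => /=; rewrite ?H1 ?H2 ?H3 ?H4 ?andbT //; lia.
Qed.

Lemma feas_of n w : weigh n w -> 3 ^ (size w).-1 < 2 * n + 1 -> feasible_partition n w.
Proof.
move=> Hw Hlt; split; first by apply/weighE.
move=> w' /weighE Hw'; have := count_bound Hw'.
case: (leqP (size w) (size w')) => // Hlt2.
have : 3 ^ size w' <= 3 ^ (size w).-1 by rewrite leq_exp2l //; lia.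
lia.
Qed.

Lemma wit2 n M s : all (fun x => 0 < x) s -> good s -> 0 < M ->
  M <= 2 * sumn s + 1 -> (forall y, y \in s -> y <= M) -> n = M + sumn s ->
  3 ^ size s < 2 * n + 1 ->
  feasible_partition n (M :: s) /\ R_last n (M :: s) = sumn s.
Proof.
move=> Hp Hg HM HM2 Hle Hn H3; split.
  apply: feas_of => //; rewrite Hn.
  have -> : M + sumn s = sumn (M :: s) by [].
  by apply: good_weigh => /=; apply/andP; split => //; apply/andP.
rewrite /R_last big_cons (maxn_idPl (max_le Hle)); lia.
Qed.


Theorem theorem5 (m n : nat) :
  0 < m ->
  3 ^ (m - 1) + 1 <= 2 * n -> 2 * n <= 3 ^ m - 1 ->
  (6 * n <= 3 ^ m + 3 + 2 * 3 ^ (m - 1) ->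
     (forall w, feasible_partition n w ->
        (n + 1) %/ 3 <= R_last n w <= (6 * n + 3 ^ (m - 1) - 3) %/ 12) /\
     (exists w, feasible_partition n w /\ R_last n w = (n + 1) %/ 3) /\
     (exists w, feasible_partition n w /\
        R_last n w = (6 * n + 3 ^ (m - 1) - 3) %/ 12)) /\
  (3 ^ m + 3 + 2 * 3 ^ (m - 1) + 6 <= 6 * n ->
     (forall w, feasible_partition n w ->
        (n + 1) %/ 3 <= R_last n w <= (3 ^ (m - 1) - 1) %/ 2) /\
     (exists w, feasible_partition n w /\ R_last n w = (n + 1) %/ 3) /\
     (exists w, feasible_partition n w /\
        R_last n w = (3 ^ (m - 1) - 1) %/ 2)).
Proof.
case: m => // j _.
have -> : j.+1 - 1 = j by lia.
rewrite expnS => H1 H2.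
have [h Hh] := odd3 j.
have Hl6 := pow3_lin6 j.
have Hb1 : j <= (n + 1) %/ 3 by lia.
have Hb2 : 2 * ((n + 1) %/ 3) + 1 <= 3 ^ j.
  clear -H2 Hh; lia.
have [s0 [S1 S2 S3 S4]] := @build j ((n + 1) %/ 3) Hb1 Hb2.
have Hle0 : forall y, y \in s0 -> y <= n - (n + 1) %/ 3.
  move=> y /le_sumn; rewrite S3; lia.
have [F0 R0] := @wit2 n (n - (n + 1) %/ 3) s0 S2 S4 ltac:(lia) ltac:(lia)
  Hle0 ltac:(lia) ltac:(rewrite S1; lia).
have Hlow : exists w, feasible_partition n w /\ R_last n w = (n + 1) %/ 3.
  by exists (n - (n + 1) %/ 3 :: s0); rewrite R0 S3.
have Hsize : forall w, feasible_partition n w -> size w = j.+1.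
  move=> w [Hw Hmin]; have := Hmin _ F0.1; rewrite /= S1 => Hs1.
  have := count_bound (proj1 (weighE n w) Hw).
  case: (leqP (size w) j) => Hs2; last lia.
  have : 3 ^ size w <= 3 ^ j by rewrite leq_exp2l.
  lia.
have Hb : forall w, feasible_partition n w ->
   [/\ (n + 1) %/ 3 <= R_last n w, 2 * R_last n w + 1 <= 3 ^ j &
       forall i, j = i.+1 -> 12 * R_last n w <= 6 * n + 3 ^ j - 3].
  move=> w Fw; have Hs := Hsize w Fw.
  have Hw := proj1 (weighE n w) Fw.1.
  have ne : w != [::] by rewrite -size_eq0 Hs.
  have [Hx Hxn Hw' Hsz [Hx2 Hle]] := drop_max Hw ne.
  rewrite /R_last.
  set x := \max_(y <- w) y in Hx Hxn Hw' Hsz Hx2 Hle *.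
  have := count_bound Hw'; rewrite Hsz Hs /= => Hc.
  split; try lia.
  move=> i Ei; rewrite Ei in Hs Hc *.
  have ne' : rem x w != [::] by rewrite -size_eq0 Hsz Hs.
  have [Hx' Hxn' Hw'' Hsz' [Hx2' Hle']] := drop_max Hw' ne'.
  set x' := \max_(y <- rem x w) y in Hx' Hxn' Hw'' Hsz' Hx2' Hle'.
  have := count_bound Hw''; rewrite Hsz' Hsz Hs /= => Hc'.
  have := Hle x' (mem_rem Hx').
  move: Hc; rewrite expnS; lia.
split => Hcase.
- split; [|split] => //.
  + move=> w Fw; have [B1 B2 B3] := Hb w Fw; apply/andP; split => //.
    destruct j as [|i]; first by move: B2; rewrite expn0; lia.
    have := B3 i erefl; lia.
  + destruct j as [|i].
      exists (n - (n + 1) %/ 3 :: s0); rewrite R0 S3; split => //.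
      move: H1 H2; rewrite expn0; lia.
    have [T HT] := odd3 i; have := pow3_lin i; rewrite HT => HiT.
    move: H1 H2 Hcase Hh Hl6; rewrite expnS HT => H1 H2 Hcase Hh Hl6.
    have [t [T1 T2 T3 T4]] := @build i T ltac:(lia) ltac:(rewrite HT; lia).
    set R := (6 * n + 3 * (2 * T + 1) - 3) %/ 12.
    have [F R1] := @wit2 n (n - R) ((R - T) :: t) ltac:(rewrite /= T2 andbT; lia)
      ltac:(rewrite /= T3 T4 andbT; lia) ltac:(lia) ltac:(rewrite /= T3; lia)
      ltac:(move=> y; rewrite inE => /orP [/eqP ->|/le_sumn]; rewrite ?T3; lia)
      ltac:(rewrite /= T3; lia) ltac:(rewrite /= T1 expnS HT; lia).
    by exists (n - R :: (R - T) :: t); rewrite R1 /= T3; split => //; lia.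
- split; [|split] => //.
  + move=> w Fw; have [B1 B2 B3] := Hb w Fw; apply/andP; split => //; lia.
  + destruct j as [|i]; first by move: H2 Hcase; rewrite expn0; lia.
    have [T HT] := odd3 i; have := pow3_lin i; rewrite HT => HiT.
    move: H1 H2 Hcase Hh Hl6; rewrite expnS HT => H1 H2 Hcase Hh Hl6.
    have [t [T1 T2 T3 T4]] := @build i T ltac:(lia) ltac:(rewrite HT; lia).
    set R := (3 * (2 * T + 1) - 1) %/ 2.
    have [F R1] := @wit2 n (n - R) ((R - T) :: t) ltac:(rewrite /= T2 andbT; lia)
      ltac:(rewrite /= T3 T4 andbT; lia) ltac:(lia) ltac:(rewrite /= T3; lia)
      ltac:(move=> y; rewrite inE => /orP [/eqP ->|/le_sumn]; rewrite ?T3; lia)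
      ltac:(rewrite /= T3; lia) ltac:(rewrite /= T1 expnS HT; lia).
    by exists (n - R :: (R - T) :: t); rewrite R1 /= T3; split => //; lia.
Qed.
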